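(* Let $\mathcal{I}$ be an $\mathcal{R}$-monoid, let $\mathcal{S} \subseteq \mathcal{P}(\mathbb{N})$ be closed under subsets, and let $\mathcal{L}$ be a class of languages. The following are equivalent: (1) there is a learner $h\in\mathcal I$ that $\mathbf{Txt}\mathbf{G}\mathbf{Caut}_{\mathbf{Tar}}\mathbf{Ex}$-learns every $L\in\mathcal L$ and that is defined on every text $T\in\mathbf{Txt}(\mathcal S)$ (i.e. $\mathbf G(h,T)$ is total); (2) there is a learner $h\in\mathcal I$ that $\mathbf{Txt}\mathbf{Psd}\mathbf{Caut}_{\mathbf{Tar}}\mathbf{Ex}$-learns every $L\in\mathcal L$ and that is defined on every text $T\in\mathbf{Txt}(\mathcal S)$ (i.e. $\mathbf{Psd}(h,T)$ is total).
   Context: Fix an acceptable numbering $(\varphi_e)$ of partial computable functions, $W_e=\mathrm{dom}(\varphi_e)$. A text is a total function $T:\mathbb N\to\mathbb N\cup\{\#\}$, $\mathrm{content}(T)=\mathrm{range}(T)\setminus\{\#\}$, $T[n]=(T(0),\dots,T(n-1))$; $\mathbf{Txt}(L)$ is the set of texts with content $L$, and for $\mathcal S$ closed under subsets $\mathbf{Txt}(\mathcal S)=\bigcup_{S\in\mathcal S}\mathbf{Txt}(S)$. Learners are partial computable functions; $\mathbf G(h,T)(i)=h(T[i])$ and $\mathbf{Psd}(h,T)(i)=h(\mathrm{content}(T[i]),i)$. For total $p:\mathbb N\to\mathbb N$ and a text $T$: $\mathbf{Ex}(p,T)$ iff $\exists n_0\,\forall n\ge n_0: p(n)=p(n_0)\wedge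 W_{p(n_0)}=\mathrm{content}(T)$; $\mathbf{Caut}_{\mathbf{Tar}}(p,T)$ iff for no $n$ is $\mathrm{content}(T)\subsetneq W_{p(n)}$. $h$ $\mathbf{Txt}\beta\delta\mathbf{Ex}$-learns $L$ iff for every $T\in\mathbf{Txt}(L)$, $\beta(h,T)$ is total and $\delta(\beta(h,T),T)$ and $\mathbf{Ex}(\beta(h,T),T)$ hold. $\mathcal R$ is the set of total computable functions; $\mathcal I\subseteq$ (partial computable functions) is an $\mathcal R$-monoid iff $(\mathcal I,\circ)$ is a monoid and $\mathcal R\subseteq\mathcal I$. *)

(* Defs.v *)
From Stdlib Require Import Arith List.
Import ListNotations.

Inductive prf : Type :=
| PZero : prf
| PSucc : prf
| PProj : nat -> prf
| PComp : prf -> list prf -> prf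
| PRec  : prf -> prf -> prf
| PMu   : prf -> prf.

Inductive evalp : prf -> list nat -> nat -> Prop :=
| ev_zero xs : evalp PZero xs 0
| ev_succ xs : evalp PSucc xs (S (hd 0 xs))
| ev_proj i xs : evalp (PProj i) xs (nth i xs 0)
| ev_comp f gs xs ys y :
    Forall2 (fun g z => evalp g xs z) gs ys -> evalp f ys y ->
    evalp (PComp f gs) xs y
| ev_rec0 f g xs y : evalp f xs y -> evalp (PRec f g) (0 :: xs) y
| ev_recS f g n xs r y :
    evalp (PRec f g) (n :: xs) r -> evalp g (n :: r :: xs) y ->
    evalp (PRec f g) (S n :: xs) y
| ev_mu f xs n :
    evalp f (n :: xs) 0 ->
    (forall m, m < n -> exists k, evalp f (m :: xs) (S k)) ->
    evalp (PMu f) xs n.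

Definition pfun := nat -> option nat.

Definition pcomp (f g : pfun) : pfun :=
  fun x => match g x with Some y => f y | None => None end.

Definition partial_computable (f : pfun) : Prop :=
  exists t, forall x y, f x = Some y <-> evalp t [x] y.

Definition total_pfun (f : pfun) : Prop := forall x, f x <> None.

Definition total_computable (f : pfun) : Prop :=
  partial_computable f /\ total_pfun f.

Definition computable_numbering (psi : nat -> pfun) : Prop :=
  exists t, forall e x y, psi e x = Some y <-> evalp t [e; x] y.

Definition acceptable (phi : nat -> pfun) : Prop :=
  computable_numbering phi /\
  forall psi, computable_numbering psi ->
    exists s : nat -> nat,
      (exists t, forall x, evalp t [x] (s x)) /\
      forall e x, phi (s e) x = psi e x.

Definition W (phi : nat -> pfun) (e : nat) : nat -> Prop :=
  fun x => phi e x <> None.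

Definition R_monoid (I : pfun -> Prop) : Prop :=
  (forall f, I f -> partial_computable f) /\
  I (fun x => Some x) /\
  (forall f g, I f -> I g -> I (pcomp f g)) /\
  (forall f, total_computable f -> I f).

(** A text: [None] stands for the pause symbol #. *)
Definition text := nat -> option nat.

Definition content (T : text) : nat -> Prop := fun x => exists n, T n = Some x.

Definition set_eq (A B : nat -> Prop) : Prop := forall x, A x <-> B x.

Definition closed_under_subsets (S : (nat -> Prop) -> Prop) : Prop :=
  forall A B, (forall x, B x -> A x) -> S A -> S B.

Definition TxtS (S : (nat -> Prop) -> Prop) (T : text) : Prop := S (content T).

Definition cpair (x y : nat) : nat := (x + y) * (x + y + 1) / 2 + y.

Definition code_elem (a : option nat) : nat :=
  match a with None => 0 | Some n => S n end.

Definition code_seq (s : list (option nat)) : nat :=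
  fold_right (fun a c => S (cpair (code_elem a) c)) 0 s.

Definition initseg (T : text) (i : nat) : list (option nat) := map T (seq 0 i).

(** Canonical index of the finite set content(T[i]): sum of 2^x. *)
Fixpoint somes (s : list (option nat)) : list nat :=
  match s with
  | [] => []
  | Some x :: s' => x :: somes s'
  | None :: s' => somes s'
  end.

Definition canon_content (T : text) (i : nat) : nat :=
  fold_right (fun x c => 2 ^ x + c) 0 (nodup Nat.eq_dec (somes (initseg T i))).

Definition Gbeta (h : pfun) (T : text) : nat -> option nat :=
  fun i => h (code_seq (initseg T i)).

Definition Psdbeta (h : pfun) (T : text) : nat -> option nat :=
  fun i => h (cpair (canon_content T i) i).

Definition Ex (phi : nat -> pfun) (p : nat -> nat) (T : text) : Prop :=
  exists n0, forall n, n0 <= n ->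
    p n = p n0 /\ set_eq (W phi (p n0)) (content T).

Definition CautTar (phi : nat -> pfun) (p : nat -> nat) (T : text) : Prop :=
  ~ exists n, (forall x, content T x -> W phi (p n) x) /\
              exists x, W phi (p n) x /\ ~ content T x.

Definition learns (phi : nat -> pfun) (beta : pfun -> text -> nat -> option nat)
    (h : pfun) (L : nat -> Prop) : Prop :=
  forall T : text, set_eq (content T) L ->
    exists p : nat -> nat,
      (forall n, beta h T n = Some (p n)) /\ CautTar phi p T /\ Ex phi p T.

Definition defined_on (beta : pfun -> text -> nat -> option nat) (h : pfun)
    (S : (nat -> Prop) -> Prop) : Prop :=
  forall T : text, TxtS S T -> forall n, beta h T n <> None.

(* Main.v *)
Require Import Defs.
From Stdlib Require Import Arith List Lia Classical IndefiniteDescription.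
Import ListNotations.

Fixpoint msearch (F : nat -> option nat) (fuel m : nat) : option nat :=
  match fuel with
  | 0 => None
  | S fu => match F m with
            | Some 0 => Some m
            | Some (S _) => msearch F fu (S m)
            | None => None
            end
  end.

Fixpoint olist (l : list (option nat)) : option (list nat) :=
  match l with
  | [] => Some []
  | o :: l' => match o with
               | Some z => match olist l' with Some zs => Some (z :: zs) | None => None end
               | None => None end
  end.

Fixpoint ev (k : nat) (t : prf) (xs : list nat) {struct t} : option nat :=
  match t with
  | PZero => Some 0
  | PSucc => Some (S (hd 0 xs))
  | PProj i => Some (nth i xs 0)
  | PComp f gs =>
      match olist (map (fun g => ev k g xs) gs) with
      | Some ys => ev k f ys
      | None => None
      end
  | PRec f g =>
      match xs with
      | [] => None
      | n :: ys => nat_rect (fun _ => option nat) (ev k f ys)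
                     (fun m r => match r with Some r' => ev k g (m :: r' :: ys) | None => None end) n
      end
  | PMu f => msearch (fun m => ev k f (m :: xs)) k 0
  end.

Lemma ev_comp_eq k f gs xs :
  ev k (PComp f gs) xs =
  match olist (map (fun g => ev k g xs) gs) with Some ys => ev k f ys | None => None end.
Proof.
  reflexivity.
Qed.

Definition prf_ind' (P : prf -> Prop) (H0 : P PZero) (H1 : P PSucc)
  (H2 : forall i, P (PProj i))
  (H3 : forall f gs, P f -> Forall P gs -> P (PComp f gs))
  (H4 : forall f g, P f -> P g -> P (PRec f g))
  (H5 : forall f, P f -> P (PMu f)) : forall t, P t :=
  fix F t := match t return P t with
  | PZero => H0 | PSucc => H1 | PProj i => H2 i
  | PComp f gs => H3 f gs (F f)
      ((fix G gs := match gs return Forall P gs with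
                    | [] => Forall_nil P
                    | g :: gs' => @Forall_cons _ P g gs' (F g) (G gs') end) gs)
  | PRec f g => H4 f g (F f) (F g)
  | PMu f => H5 f (F f)
  end.

Lemma olist_map_some {A} (F : A -> option nat) l ys :
  olist (map F l) = Some ys -> Forall2 (fun a y => F a = Some y) l ys.
Proof.
  revert ys; induction l as [|a l IH]; simpl; intros ys H.
  - inversion H; constructor.
  - destruct (F a) eqn:E; [|discriminate].
    destruct (olist (map F l)) eqn:E2; [|discriminate].
    inversion H; subst. constructor; auto.
Qed.

Lemma olist_map_some' {A} (F : A -> option nat) l ys :
  Forall2 (fun a y => F a = Some y) l ys -> olist (map F l) = Some ys.
Proof.
  induction 1; simpl; auto. rewrite H, IHForall2. auto.
Qed.

Lemma msearch_sound F fu m n :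
  msearch F fu m = Some n ->
  m <= n /\ F n = Some 0 /\ forall j, m <= j < n -> exists z, F j = Some (S z).
Proof.
  revert m; induction fu; simpl; intros m H; [discriminate|].
  destruct (F m) as [[|z]|] eqn:E; try discriminate.
  - inversion H; subst. repeat split; auto. intros; lia.
  - destruct (IHfu _ H) as (A & B & C). repeat split; auto; try lia.
    intros j Hj. destruct (Nat.eq_dec j m). subst; eauto. apply C; lia.
Qed.

Lemma ev_sound : forall t k xs y, ev k t xs = Some y -> evalp t xs y.
Proof.
  induction t using prf_ind'; intros k xs y Hev.
  - inversion Hev; constructor.
  - inversion Hev; constructor.
  - inversion Hev; constructor.
  - rewrite ev_comp_eq in Hev.
    destruct (olist (map (fun g => ev k g xs) gs)) eqn:E; [|discriminate].
    apply olist_map_some in E.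
    econstructor; [|eapply IHt; eauto].
    clear IHt Hev. induction E; [constructor|]; inversion H; subst; constructor; eauto.
  - simpl in Hev. destruct xs as [|n ys]; [discriminate|].
    revert y Hev. induction n; simpl; intros y Hev.
    + constructor; eauto.
    + destruct (nat_rect _ _ _ n) eqn:E; [|discriminate].
      econstructor; eauto.
  - simpl in Hev. apply msearch_sound in Hev as (_ & B & C).
    constructor; eauto.
    intros m Hm. destruct (C m) as [z Hz]; [lia|]. eauto.
Qed.

Lemma msearch_mono F F' fu fu' m n :
  msearch F fu m = Some n -> fu <= fu' ->
  (forall j y, F j = Some y -> F' j = Some y) -> msearch F' fu' m = Some n.
Proof.
  revert fu' m; induction fu; simpl; intros fu' m H Hle HF; [discriminate|].
  destruct fu' as [|fu']; [lia|]. simpl.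
  destruct (F m) as [[|z]|] eqn:E; try discriminate.
  - rewrite (HF _ _ E). auto.
  - rewrite (HF _ _ E). eapply IHfu; eauto. lia.
Qed.

Lemma ev_mono : forall t k k' xs y, ev k t xs = Some y -> k <= k' -> ev k' t xs = Some y.
Proof.
  induction t using prf_ind'; intros k k' xs y Hev Hk; try exact Hev.
  - rewrite ev_comp_eq in *.
    destruct (olist (map (fun g => ev k g xs) gs)) eqn:E; [|discriminate].
    apply olist_map_some in E.
    rewrite (olist_map_some' (fun g => ev k' g xs) gs l).
    + eauto.
    + clear Hev IHt. induction E; [constructor|]; inversion H; subst; constructor; eauto.
  - simpl in *. destruct xs as [|n ys]; [discriminate|].
    revert y Hev. induction n; simpl; intros y Hev; eauto.
    destruct (nat_rect (fun _ => option nat) (ev k t1 ys) _ n) eqn:E; [|discriminate].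
    rewrite (IHn _ eq_refl). eauto.
  - simpl in *. eapply msearch_mono; [exact Hev|exact Hk|]. intros j y0 Hj; exact (IHt _ _ _ _ Hj Hk).
Qed.

Lemma msearch_complete F fu m n :
  F n = Some 0 -> (forall j, m <= j < n -> exists z, F j = Some (S z)) ->
  m <= n -> n < m + fu -> msearch F fu m = Some n.
Proof.
  revert m; induction fu; simpl; intros m H0 H1 H2 H3; [lia|].
  destruct (Nat.eq_dec m n).
  - subst. rewrite H0. auto.
  - destruct (H1 m) as [z Hz]; [lia|]. rewrite Hz. apply IHfu; auto; try lia.
    intros; apply H1; lia.
Qed.

Lemma ev_complete : forall t xs y, evalp t xs y -> exists k, ev k t xs = Some y.
Proof.
  fix IH 4. intros t xs y H. destruct H.
  - exists 0; reflexivity.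
  - exists 0; reflexivity.
  - exists 0; reflexivity.
  - destruct (IH _ _ _ H0) as [k1 Hk1].
    assert (Hs : exists k, forall k', k <= k' -> olist (map (fun g => ev k' g xs) gs) = Some ys).
    { clear H0 Hk1.
      revert gs ys H.
      refine (fix aux gs ys (HF : Forall2 (fun g z => evalp g xs z) gs ys) {struct HF} := _).
      destruct HF as [|g z gs' zs Hg HF'].
      - exists 0. intros; reflexivity.
      - destruct (IH _ _ _ Hg) as [k2 Hk2]. destruct (aux _ _ HF') as [k3 Hk3].
        exists (max k2 k3). intros k' Hk'. simpl.
        rewrite (ev_mono _ _ k' _ _ Hk2) by lia. rewrite Hk3 by lia. reflexivity. }
    destruct Hs as [k2 Hk2]. exists (max k1 k2). rewrite ev_comp_eq, Hk2 by lia.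
    eapply ev_mono; eauto; lia.
  - destruct (IH _ _ _ H) as [k Hk]. exists k. simpl. exact Hk.
  - destruct (IH _ _ _ H) as [k1 Hk1]. destruct (IH _ _ _ H0) as [k2 Hk2].
    exists (max k1 k2).
    assert (A : ev (max k1 k2) (PRec f g) (n :: xs) = Some r) by (eapply ev_mono; [exact Hk1|lia]).
    simpl in A |- *. rewrite A. eapply ev_mono; eauto; lia.
  - destruct (IH _ _ _ H) as [k1 Hk1].
    assert (Hb : forall n', n' <= n -> exists k, forall k', k <= k' -> forall j, j < n' -> exists z, ev k' f (j :: xs) = Some (S z)).
    { induction n' as [|n' IHn]; intros Hn'.
      - exists 0. intros; lia.
      - destruct IHn as [k2 Hk2]; [lia|].
        destruct (H0 n') as [z Hz]; [lia|].
        destruct (IH _ _ _ Hz) as [k3 Hk3].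
        exists (max k2 k3). intros k' Hk' j Hj.
        destruct (Nat.eq_dec j n').
        + subst. exists z. eapply ev_mono; eauto; lia.
        + apply Hk2; lia. }
    destruct (Hb n (le_n _)) as [k2 Hk2].
    exists (max (S n) (max k1 k2)). remember (max (S n) (max k1 k2)) as K.
    simpl. apply msearch_complete; try lia.
    + cbv beta. eapply ev_mono; [exact Hk1|lia].
    + intros j Hj. apply Hk2; lia.
Qed.

Lemma evalp_det t xs y y' : evalp t xs y -> evalp t xs y' -> y = y'.
Proof.
  intros H H'. apply ev_complete in H as [k H]. apply ev_complete in H' as [k' H'].
  apply (ev_mono _ _ (max k k')) in H; [|lia]. apply (ev_mono _ _ (max k k')) in H'; [|lia].
  congruence.
Qed.

Definition prim (n : nat) (f : list nat -> nat) : Prop :=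
  exists t, forall xs, length xs = n -> evalp t xs (f xs).

Lemma prim_ext n f g : (forall xs, length xs = n -> f xs = g xs) -> prim n f -> prim n g.
Proof. intros E [t Ht]. exists t. intros xs L. rewrite <- E by auto. auto. Qed.

Lemma prim_proj n i : prim n (fun xs => nth i xs 0).
Proof. exists (PProj i). intros; constructor. Qed.

Lemma prim_zero n : prim n (fun _ => 0).
Proof. exists PZero. intros; constructor. Qed.

Lemma prim_comp n m g fs : prim m g -> length fs = m -> Forall (prim n) fs ->
  prim n (fun xs => g (map (fun f => f xs) fs)).
Proof.
  intros [tg Hg] Hl HF.
  assert (A : exists ts, Forall2 (fun f t => forall xs, length xs = n -> evalp t xs (f xs)) fs ts).
  { clear Hl. induction HF as [|f fs [t Ht] _ [ts IH]].
    - exists []; constructor.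
    - exists (t :: ts); constructor; auto. }
  destruct A as [ts A].
  exists (PComp tg ts). intros xs L.
  apply ev_comp with (ys := map (fun f => f xs) fs).
  - clear - A L. induction A; simpl; constructor; auto.
  - apply Hg. rewrite length_map; auto.
Qed.

Lemma prim_succ n f : prim n f -> prim n (fun xs => S (f xs)).
Proof.
  intros [t Ht]. exists (PComp PSucc [t]). intros xs L.
  econstructor. constructor; [apply Ht; auto|constructor]. constructor.
Qed.

Lemma prim_const n c : prim n (fun _ => c).
Proof. induction c. apply prim_zero. apply (prim_succ _ _ IHc). Qed.

Lemma prim_rec0 n f0 g : prim n f0 -> prim (S (S n)) g ->
  prim (S n) (fun xs => nat_rect (fun _ => nat) (f0 (tl xs)) (fun k r => g (k :: r :: tl xs)) (hd 0 xs)).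
Proof.
  intros [tf Hf] [tg Hg]. exists (PRec tf tg). intros [|m ys] L; simpl in L; [discriminate|].
  injection L as L. simpl. induction m; simpl.
  - constructor. auto.
  - econstructor. exact IHm. apply Hg. simpl. auto.
Qed.

Lemma map_nth_seq (l : list nat) j n : length l = j + n ->
  map (fun i => nth i l 0) (seq j n) = skipn j l.
Proof.
  revert j l. induction n; intros j l L; simpl.
  - rewrite skipn_all2; auto; lia.
  - rewrite IHn by lia.
    assert (K : forall j (l : list nat), j < length l -> skipn j l = nth j l 0 :: skipn (S j) l).
    { induction j0; intros l0 H0; destruct l0; simpl in *; try lia; auto. apply IHj0; lia. }
    rewrite (K j l) by lia. reflexivity.
Qed.

Lemma prim_allproj n : Forall (prim n) (map (fun i xs => nth i xs 0) (seq 0 n)).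
Proof. apply Forall_forall. intros f Hf. apply in_map_iff in Hf as [i [<- _]]. apply prim_proj. Qed.

Lemma map_app_proj (xs : list nat) n : length xs = n ->
  map (fun f : list nat -> nat => f xs) (map (fun i xs => nth i xs 0) (seq 0 n)) = xs.
Proof.
  intros L. rewrite map_map. rewrite map_nth_seq by lia. reflexivity.
Qed.

Lemma prim_rec n N f0 g : prim n N -> prim n f0 -> prim (S (S n)) g ->
  prim n (fun xs => nat_rect (fun _ => nat) (f0 xs) (fun k r => g (k :: r :: xs)) (N xs)).
Proof.
  intros HN Hf Hg.
  pose proof (prim_comp n (S n) _ (N :: map (fun i xs => nth i xs 0) (seq 0 n)) (prim_rec0 n f0 g Hf Hg)) as H.
  eapply prim_ext; [|apply H].
  - intros xs L. simpl. rewrite map_app_proj by auto. reflexivity.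
  - simpl. rewrite length_map, length_seq. auto.
  - constructor; auto. apply prim_allproj.
Qed.

Definition P1 (g : nat -> nat) := prim 1 (fun xs => g (nth 0 xs 0)).
Definition P2 (g : nat -> nat -> nat) := prim 2 (fun xs => g (nth 0 xs 0) (nth 1 xs 0)).
Definition P3 (g : nat -> nat -> nat -> nat) := prim 3 (fun xs => g (nth 0 xs 0) (nth 1 xs 0) (nth 2 xs 0)).

Lemma pc1 n g f : P1 g -> prim n f -> prim n (fun xs => g (f xs)).
Proof.
  intros Hg Hf. eapply prim_ext; [|apply (prim_comp n 1 _ [f] Hg)]; auto.
Qed.
Lemma pc2 n g f1 f2 : P2 g -> prim n f1 -> prim n f2 -> prim n (fun xs => g (f1 xs) (f2 xs)).
Proof.
  intros Hg H1 H2. eapply prim_ext; [|apply (prim_comp n 2 _ [f1; f2] Hg)]; auto.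
Qed.
Lemma pc3 n g f1 f2 f3 : P3 g -> prim n f1 -> prim n f2 -> prim n f3 ->
  prim n (fun xs => g (f1 xs) (f2 xs) (f3 xs)).
Proof.
  intros Hg H1 H2 H3. eapply prim_ext; [|apply (prim_comp n 3 _ [f1; f2; f3] Hg)]; auto.
Qed.

Definition ite (c a b : nat) := match c with 0 => b | S _ => a end.

Lemma P3_ite : P3 ite.
Proof.
  unfold P3.
  pose proof (prim_rec0 2 (fun ys => nth 1 ys 0) (fun zs => nth 2 zs 0) (prim_proj _ _) (prim_proj _ _)) as H.
  eapply prim_ext; [|exact H].
  intros [|c [|a [|b [|]]]] L; simpl in L; try discriminate. destruct c; reflexivity.
Qed.

Lemma P2_add : P2 Nat.add.
Proof.
  pose proof (prim_rec0 1 (fun ys => nth 0 ys 0) (fun zs => S (nth 1 zs 0)) (prim_proj _ _) (prim_succ _ _ (prim_proj _ _))) as H.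
  eapply prim_ext; [|exact H].
  intros [|a [|b [|]]] L; simpl in L; try discriminate. simpl. induction a; simpl; auto.
Qed.

Lemma P2_mul : P2 Nat.mul.
Proof.
  assert (G : prim 3 (fun zs => nth 2 zs 0 + nth 1 zs 0)) by (apply pc2; [apply P2_add|apply prim_proj|apply prim_proj]).
  pose proof (prim_rec0 1 (fun ys => 0) _ (prim_zero _) G) as H.
  eapply prim_ext; [|exact H].
  intros [|a [|b [|]]] L; simpl in L; try discriminate. simpl. induction a; simpl; auto; try (rewrite IHa; lia).
Qed.

Lemma P1_pred : P1 Nat.pred.
Proof.
  pose proof (prim_rec0 0 (fun ys => 0) (fun zs => nth 0 zs 0) (prim_zero _) (prim_proj _ _)) as H.
  eapply prim_ext; [|exact H].
  intros [|a [|]] L; simpl in L; try discriminate. destruct a; reflexivity.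
Qed.

Lemma P2_sub : P2 Nat.sub.
Proof.
  (* a - b = iterate pred b times on a *)
  assert (G : prim 4 (fun zs => Nat.pred (nth 1 zs 0))) by (apply pc1; [apply P1_pred|apply prim_proj]).
  pose proof (prim_rec 2 (fun xs => nth 1 xs 0) (fun xs => nth 0 xs 0) _ (prim_proj _ _) (prim_proj _ _) G) as H.
  eapply prim_ext; [|exact H].
  intros [|a [|b [|]]] L; simpl in L; try discriminate. simpl.
  induction b; simpl; [lia|]. rewrite IHb. lia.
Qed.

Lemma pconst n c : prim n (fun _ => c).
Proof. apply prim_const. Qed.

Ltac pauto :=
  repeat match goal with
  | |- prim _ _ => assumption
  | |- P1 _ => solve [eauto with primdb]
  | |- P2 _ => solve [eauto with primdb]
  | |- P3 _ => solve [eauto with primdb]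
  | |- prim _ (fun _ => nth _ _ 0) => apply prim_proj
  | |- prim _ (fun _ => ?c) => apply pconst
  | |- prim _ (fun xs => S (@?a xs)) => apply prim_succ
  | |- prim ?n (fun xs => ?g (@?a xs) (@?b xs) (@?c xs)) => apply (pc3 n g a b c); [solve [eauto with primdb]|..]
  | |- prim ?n (fun xs => ?g (@?a xs) (@?b xs)) => apply (pc2 n g a b); [solve [eauto with primdb]|..]
  | |- prim ?n (fun xs => ?g (@?a xs)) => apply (pc1 n g a); [solve [eauto with primdb]|..]
  end.

Create HintDb primdb.
#[export] Hint Resolve P3_ite P2_add P2_mul P1_pred P2_sub : primdb.

Definition nlt a b := ite (b - a) 1 0.
Definition neq a b := ite ((a - b) + (b - a)) 0 1.
Definition nand a b := ite a (ite b 1 0) 0.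
Definition nor a b := ite a 1 (ite b 1 0).
Definition nnot a := ite a 0 1.
Definition nimp a b := nor (nnot a) b.

Lemma P2_nlt : P2 nlt. Proof. unfold P2, nlt. pauto. Qed.
Lemma P2_neq : P2 neq. Proof. unfold P2, neq. pauto. Qed.
Lemma P2_nand : P2 nand. Proof. unfold P2, nand. pauto. Qed.
Lemma P2_nor : P2 nor. Proof. unfold P2, nor. pauto. Qed.
Lemma P1_nnot : P1 nnot. Proof. unfold P1, nnot. pauto. Qed.
#[export] Hint Resolve P2_nlt P2_neq P2_nand P2_nor P1_nnot : primdb.
Lemma P2_nimp : P2 nimp. Proof. unfold P2, nimp. pauto. Qed.
#[export] Hint Resolve P2_nimp : primdb.

Lemma nlt_spec a b : nlt a b = if a <? b then 1 else 0.
Proof. unfold nlt, ite. destruct (a <? b) eqn:E; [apply Nat.ltb_lt in E|apply Nat.ltb_ge in E]; destruct (b - a) eqn:F; lia. Qed.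
Lemma neq_spec a b : neq a b = if a =? b then 1 else 0.
Proof. unfold neq, ite. destruct (a =? b) eqn:E; [apply Nat.eqb_eq in E|apply Nat.eqb_neq in E]; destruct (a - b + (b - a)) eqn:F; lia. Qed.
Fixpoint bsearch (p : nat -> nat) (b : nat) : nat :=
  match b with
  | 0 => 0
  | S b' => let r := bsearch p b' in ite (nlt r b') r (ite (p b') b' (S b'))
  end.

Lemma bsearch_le p b : bsearch p b <= b.
Proof.
  induction b; simpl; auto. rewrite nlt_spec.
  destruct (bsearch p b <? b) eqn:E; simpl; [apply Nat.ltb_lt in E; lia|].
  destruct (p b); simpl; lia.
Qed.

Lemma bsearch_spec p b :
  (bsearch p b < b -> p (bsearch p b) <> 0) /\ (forall j, j < bsearch p b -> p j = 0).
Proof.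
  induction b as [|b [IH1 IH2]]; simpl; [split; intros; lia|].
  rewrite nlt_spec. pose proof (bsearch_le p b).
  destruct (bsearch p b <? b) eqn:E; simpl.
  - apply Nat.ltb_lt in E. split; auto.
  - apply Nat.ltb_ge in E. assert (bsearch p b = b) by lia. rewrite H0 in *.
    destruct (p b) eqn:Ep; simpl.
    + split; [lia|]. intros j Hj. destruct (Nat.eq_dec j b); [subst; auto|apply IH2; lia].
    + split; [intros; lia|auto].
Qed.

Lemma bsearch_found p b : bsearch p b < b -> p (bsearch p b) <> 0.
Proof. apply bsearch_spec. Qed.
Lemma bsearch_min p b j : j < bsearch p b -> p j = 0.
Proof. apply bsearch_spec. Qed.
Lemma bsearch_upper p b j : j < b -> p j <> 0 -> bsearch p b <= j.
Proof.
  intros H1 H2. destruct (le_lt_dec (bsearch p b) j); auto.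
  exfalso. apply H2. apply (bsearch_min p b). auto.
Qed.
Lemma bsearch_eq p b w : w < b -> p w <> 0 -> (forall j, j < w -> p j = 0) -> bsearch p b = w.
Proof.
  intros H1 H2 H3. pose proof (bsearch_upper p b w H1 H2).
  destruct (Nat.eq_dec (bsearch p b) w); auto.
  exfalso. apply (bsearch_found p b); [lia|]. apply H3. lia.
Qed.
Lemma bsearch_none p b : (forall j, j < b -> p j = 0) -> bsearch p b = b.
Proof.
  intros H. pose proof (bsearch_le p b). destruct (Nat.eq_dec (bsearch p b) b); auto.
  exfalso. apply (bsearch_found p b); [lia|]. apply H. lia.
Qed.

Lemma prim_drop1 n p : prim (S n) p -> prim (S (S n)) (fun zs => p (hd 0 zs :: tl (tl zs))).
Proof.
  intros Hp.
  pose proof (prim_comp (S (S n)) (S n) p ((fun zs => nth 0 zs 0) :: map (fun i zs => nth i zs 0) (seq 2 n)) Hp) as H.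
  eapply prim_ext; [|apply H].
  - intros [|k [|r xs]] L; simpl in L; try discriminate. simpl. f_equal. f_equal.
    rewrite map_map. rewrite map_nth_seq by (simpl; lia). reflexivity.
  - simpl. rewrite length_map, length_seq. auto.
  - constructor; [apply prim_proj|]. apply Forall_forall. intros f Hf. apply in_map_iff in Hf as [i [<- _]]. apply prim_proj.
Qed.

Lemma prim_bsearch n B p : prim n B -> prim (S n) p ->
  prim n (fun xs => bsearch (fun m => p (m :: xs)) (B xs)).
Proof.
  intros HB Hp.
  assert (G : prim (S (S n)) (fun zs => ite (nlt (nth 1 zs 0) (nth 0 zs 0)) (nth 1 zs 0)
                         (ite (p (hd 0 zs :: tl (tl zs))) (nth 0 zs 0) (S (nth 0 zs 0))))).
  { apply pc3; [apply P3_ite|pauto|pauto|].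
    apply pc3; [apply P3_ite| |pauto|pauto]. apply prim_drop1; auto. }
  pose proof (prim_rec n B (fun _ => 0) _ HB (pconst _ _) G) as H.
  eapply prim_ext; [|exact H]. intros xs L. simpl.
  generalize (B xs). induction n0; simpl; auto. rewrite IHn0. reflexivity.
Qed.

Definition bex (p : nat -> nat) b := nlt (bsearch p b) b.
Definition ball (p : nat -> nat) b := nnot (bex (fun j => nnot (p j)) b).

Lemma bex_spec p b : bex p b <> 0 <-> exists j, j < b /\ p j <> 0.
Proof.
  unfold bex. rewrite nlt_spec. destruct (bsearch p b <? b) eqn:E.
  - apply Nat.ltb_lt in E. split; auto. intros _. exists (bsearch p b). split; auto. apply bsearch_found; auto.
  - apply Nat.ltb_ge in E. split; [lia|]. intros [j [H1 H2]]. pose proof (bsearch_upper p b j H1 H2). lia.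
Qed.

Lemma nnot_spec a : nnot a <> 0 <-> a = 0.
Proof. unfold nnot, ite; destruct a; split; auto; intros; lia. Qed.

Lemma ball_spec p b : ball p b <> 0 <-> forall j, j < b -> p j <> 0.
Proof.
  unfold ball. rewrite nnot_spec. split.
  - intros H j Hj Hp. assert (bex (fun j => nnot (p j)) b <> 0); [|lia].
    apply bex_spec. exists j. split; auto. apply nnot_spec; auto.
  - intros H. destruct (bex (fun j => nnot (p j)) b) eqn:E; auto. exfalso.
    assert (A : bex (fun j => nnot (p j)) b <> 0) by lia. apply bex_spec in A as [j [H1 H2]].
    apply nnot_spec in H2. apply (H j); auto.
Qed.

Lemma prim_bex n B p : prim n B -> prim (S n) p -> prim n (fun xs => bex (fun m => p (m :: xs)) (B xs)).
Proof. intros. unfold bex. apply pc2; [apply P2_nlt| |auto]. apply prim_bsearch; auto. Qed.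

Lemma prim_ball n B p : prim n B -> prim (S n) p -> prim n (fun xs => ball (fun m => p (m :: xs)) (B xs)).
Proof.
  intros. unfold ball. apply pc1; [apply P1_nnot|].
  apply (prim_bex n B (fun zs => nnot (p zs))); auto. apply pc1; auto. apply P1_nnot.
Qed.

Definition mydiv a b := bsearch (fun m => nlt a ((S m) * b)) (S a).

Lemma mydiv_spec a b : 0 < b -> mydiv a b = a / b.
Proof.
  intros Hb. unfold mydiv. apply bsearch_eq.
  - assert (a / b <= a) by (apply Nat.div_le_upper_bound; nia). lia.
  - rewrite nlt_spec. destruct (a <? S (a / b) * b) eqn:E; [lia|]. apply Nat.ltb_ge in E.
    pose proof (Nat.div_mod a b ltac:(lia)). pose proof (Nat.mod_upper_bound a b ltac:(lia)). nia.
  - intros j Hj. rewrite nlt_spec. destruct (a <? S j * b) eqn:E; auto. apply Nat.ltb_lt in E.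
    pose proof (Nat.div_mod a b ltac:(lia)). nia.
Qed.

Lemma P2_mydiv : P2 mydiv.
Proof.
  unfold P2, mydiv.
  apply (prim_bsearch 2 (fun xs => S (nth 0 xs 0)) (fun zs => nlt (nth 1 zs 0) (S (nth 0 zs 0) * nth 2 zs 0))); pauto.
Qed.
#[export] Hint Resolve P2_mydiv : primdb.

Definition pow2 v := 2 ^ v.
Lemma P1_pow2 : P1 pow2.
Proof.
  unfold P1.
  assert (G : prim 3 (fun zs => 2 * nth 1 zs 0)) by pauto.
  pose proof (prim_rec 1 (fun xs => nth 0 xs 0) (fun _ => 1) _ (prim_proj _ _) (pconst _ _) G) as H.
  eapply prim_ext; [|exact H]. intros xs L. simpl. unfold pow2. induction (nth 0 xs 0); simpl; auto; try (rewrite <- IHn; lia).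
Qed.
#[export] Hint Resolve P1_pow2 : primdb.

Definition div2p a v := a / 2 ^ v.
Lemma P2_div2p : P2 div2p.
Proof.
  eapply prim_ext; [|apply (pc2 2 mydiv (fun xs => nth 0 xs 0) (fun xs => pow2 (nth 1 xs 0))); pauto].
  intros xs _. unfold div2p, pow2. rewrite mydiv_spec; auto. apply Nat.neq_0_lt_0, Nat.pow_nonzero. lia.
Qed.
#[export] Hint Resolve P2_div2p : primdb.

Definition bit a v := a / 2 ^ v - 2 * (a / 2 ^ v / 2).
Lemma P2_bit : P2 bit.
Proof.
  eapply prim_ext; [|apply (pc2 2 Nat.sub (fun xs => div2p (nth 0 xs 0) (nth 1 xs 0)) (fun xs => 2 * mydiv (div2p (nth 0 xs 0) (nth 1 xs 0)) 2)); pauto].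
  intros xs _. unfold bit, div2p. rewrite mydiv_spec; auto.
Qed.
#[export] Hint Resolve P2_bit : primdb.

Lemma bit_testbit a v : bit a v = if Nat.testbit a v then 1 else 0.
Proof.
  unfold bit. rewrite Nat.testbit_eqb.
  pose proof (Nat.div_mod (a / 2 ^ v) 2 ltac:(lia)). pose proof (Nat.mod_upper_bound (a / 2 ^ v) 2 ltac:(lia)).
  destruct ((a / 2 ^ v) mod 2 =? 1) eqn:E; [apply Nat.eqb_eq in E|apply Nat.eqb_neq in E]; lia.
Qed.

Lemma P2_cpair : P2 cpair.
Proof.
  eapply prim_ext; [|apply (pc2 2 Nat.add (fun xs => mydiv ((nth 0 xs 0 + nth 1 xs 0) * (nth 0 xs 0 + nth 1 xs 0 + 1)) 2) (fun xs => nth 1 xs 0)); pauto].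
  intros xs _. unfold cpair. rewrite mydiv_spec; auto.
Qed.
#[export] Hint Resolve P2_cpair : primdb.

Definition tri w := w * (w + 1) / 2.
Lemma tri_S w : tri (S w) = tri w + S w.
Proof.
  unfold tri. replace (S w * (S w + 1)) with (w * (w + 1) + (S w) * 2) by nia.
  rewrite Nat.div_add by lia. lia.
Qed.
Lemma tri_mono a b : a <= b -> tri a <= tri b.
Proof. induction 1; auto. rewrite tri_S. lia. Qed.
Lemma cpair_tri x y : cpair x y = tri (x + y) + y.
Proof. reflexivity. Qed.

Definition cw z := bsearch (fun w => nlt z (tri (S w))) (S z).
Definition csnd z := z - tri (cw z).
Definition cfst z := cw z - csnd z.

Lemma P1_tri : P1 tri.
Proof. eapply prim_ext; [|apply (pc2 1 mydiv (fun xs => nth 0 xs 0 * (nth 0 xs 0 + 1)) (fun _ => 2)); pauto].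
  intros; unfold tri; rewrite mydiv_spec; auto. Qed.
#[export] Hint Resolve P1_tri : primdb.
Lemma P1_cw : P1 cw.
Proof. unfold P1, cw. apply (prim_bsearch 1 (fun xs => S (nth 0 xs 0)) (fun zs => nlt (nth 1 zs 0) (tri (S (nth 0 zs 0))))); pauto. Qed.
#[export] Hint Resolve P1_cw : primdb.
Lemma P1_csnd : P1 csnd. Proof. unfold P1, csnd. pauto. Qed.
#[export] Hint Resolve P1_csnd : primdb.
Lemma P1_cfst : P1 cfst. Proof. unfold P1, cfst. pauto. Qed.
#[export] Hint Resolve P1_cfst : primdb.

Lemma tri_ge w : w <= tri w.
Proof. induction w; auto. rewrite tri_S. lia. Qed.

Lemma cw_spec z : tri (cw z) <= z < tri (S (cw z)).
Proof.
  unfold cw. set (p := fun w => nlt z (tri (S w))).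
  assert (Hz : p z <> 0). { unfold p. rewrite nlt_spec. pose proof (tri_ge (S z)). destruct (z <? tri (S z)) eqn:E; auto. apply Nat.ltb_ge in E. lia. }
  pose proof (bsearch_upper p (S z) z ltac:(lia) Hz) as Hle.
  pose proof (bsearch_found p (S z) ltac:(lia)) as Hf.
  pose proof (bsearch_min p (S z)) as Hm.
  set (W := bsearch p (S z)) in *. unfold p in Hf. rewrite nlt_spec in Hf.
  destruct (z <? tri (S W)) eqn:E; [|lia]. apply Nat.ltb_lt in E.
  split; auto.
  destruct W as [|w] eqn:Ew; [unfold tri; simpl; lia|].
  specialize (Hm w ltac:(lia)). unfold p in Hm. rewrite nlt_spec in Hm.
  destruct (z <? tri (S w)) eqn:E2; [discriminate|]. apply Nat.ltb_ge in E2. lia.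
Qed.

Lemma cpair_surj z : cpair (cfst z) (csnd z) = z.
Proof.
  pose proof (cw_spec z). rewrite tri_S in H. unfold cfst, csnd. rewrite cpair_tri.
  replace (cw z - (z - tri (cw z)) + (z - tri (cw z))) with (cw z) by lia. lia.
Qed.

Lemma cw_cpair x y : cw (cpair x y) = x + y.
Proof.
  unfold cw. apply bsearch_eq.
  - rewrite cpair_tri. pose proof (tri_ge (x + y)). lia.
  - rewrite nlt_spec, cpair_tri, tri_S. destruct (_ <? _) eqn:E; auto. apply Nat.ltb_ge in E. lia.
  - intros j Hj. rewrite nlt_spec, cpair_tri. destruct (_ <? _) eqn:E; auto. apply Nat.ltb_lt in E.
    pose proof (tri_mono (S j) (x + y) ltac:(lia)). lia.
Qed.

Lemma csnd_cpair x y : csnd (cpair x y) = y.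
Proof. unfold csnd. rewrite cw_cpair, cpair_tri. lia. Qed.
Lemma cfst_cpair x y : cfst (cpair x y) = x.
Proof. unfold cfst. rewrite csnd_cpair, cw_cpair. lia. Qed.
Lemma cpair_ge_snd x y : y <= cpair x y.
Proof. rewrite cpair_tri; lia. Qed.
Lemma cpair_ge_fst x y : x <= cpair x y.
Proof. rewrite cpair_tri. pose proof (tri_ge (x + y)). lia. Qed.
Definition ocode (o : option nat) : nat := match o with None => 0 | Some y => S y end.

Lemma map_proj_seq_shift (w : list nat) j n : length w = j + n ->
  map (fun f : list nat -> nat => f w) (map (fun i w => nth i w 0) (seq j n)) = skipn j w.
Proof. intros L. rewrite map_map. apply map_nth_seq; auto. Qed.

Lemma Forall_prim_proj n j m : Forall (prim n) (map (fun i w => nth i w 0) (seq j m)).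
Proof. apply Forall_forall. intros f Hf. apply in_map_iff in Hf as [i [<- _]]. apply prim_proj. Qed.

Lemma prim_let n M g : prim n M -> prim (S n) g -> prim n (fun zs => g (M zs :: zs)).
Proof.
  intros HM Hg.
  pose proof (prim_comp n (S n) g (M :: map (fun i w => nth i w 0) (seq 0 n)) Hg) as H.
  eapply prim_ext; [|apply H].
  - intros zs L. simpl. rewrite map_proj_seq_shift by lia. reflexivity.
  - simpl. rewrite length_map, length_seq. auto.
  - constructor; auto. apply Forall_prim_proj.
Qed.

Lemma prim_swap n g : prim (S (S n)) g -> prim (S (S n)) (fun ws => g (nth 1 ws 0 :: nth 0 ws 0 :: tl (tl ws))).
Proof.
  intros Hg.
  pose proof (prim_comp (S (S n)) (S (S n)) g ((fun w => nth 1 w 0) :: (fun w => nth 0 w 0) :: map (fun i w => nth i w 0) (seq 2 n)) Hg) as H.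
  eapply prim_ext; [|apply H].
  - intros [|a [|b ws]] L; simpl in L; try discriminate. simpl. rewrite map_proj_seq_shift by (simpl; lia). reflexivity.
  - simpl. rewrite length_map, length_seq. auto.
  - constructor; [apply prim_proj|constructor; [apply prim_proj|apply Forall_prim_proj]].
Qed.

Lemma msearch_skip F d fu m : d <= fu -> (forall j, j < d -> exists z, F (m + j) = Some (S z)) ->
  msearch F fu m = msearch F (fu - d) (m + d).
Proof.
  revert fu m; induction d; intros fu m Hd H.
  - rewrite Nat.sub_0_r, Nat.add_0_r. auto.
  - destruct fu; [lia|]. simpl. destruct (H 0 ltac:(lia)) as [z Hz]. rewrite Nat.add_0_r in Hz. rewrite Hz.
    rewrite IHd; [f_equal; lia|lia|]. intros j Hj. destruct (H (S j) ltac:(lia)) as [z' Hz'].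
    exists z'. rewrite <- Hz'. f_equal. lia.
Qed.

Definition musim (q : nat -> nat) (k : nat) : nat :=
  let M := bsearch (fun m => nlt (q m) 2) k in
  ite (nlt M k) (ite (neq (q M) 1) (S M) 0) 0.

Lemma musim_spec F k : ocode (msearch F k 0) = musim (fun m => ocode (F m)) k.
Proof.
  unfold musim. set (p := fun m => nlt (ocode (F m)) 2).
  pose proof (bsearch_le p k) as Hle. pose proof (bsearch_min p k) as Hmin.
  assert (Hpre : forall j, j < bsearch p k -> exists z, F (0 + j) = Some (S z)).
  { intros j Hj. specialize (Hmin j Hj). unfold p in Hmin. rewrite nlt_spec in Hmin. simpl.
    destruct (F j) as [[|z]|]; simpl in Hmin; try discriminate. eauto. }
  rewrite (msearch_skip F (bsearch p k) k 0 Hle Hpre). simpl.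
  rewrite nlt_spec. destruct (bsearch p k <? k) eqn:E.
  - apply Nat.ltb_lt in E. pose proof (bsearch_found p k E) as Hf.
    set (M := bsearch p k) in *. unfold p in Hf. rewrite nlt_spec in Hf.
    destruct (k - M) eqn:E2; [lia|]. simpl.
    destruct (F M) as [[|z]|]; simpl in *; auto; exfalso; apply Hf; destruct (S (S z) <? 2) eqn:X; auto; apply Nat.ltb_lt in X; lia.
  - apply Nat.ltb_ge in E. replace (k - bsearch p k) with 0 by lia. reflexivity.
Qed.
Definition allnz (l : list nat) := fold_right nand 1 l.

Lemma prim_fold_nand : forall m n j, j + m <= n -> prim n (fun w => allnz (firstn m (skipn j w))).
Proof.
  induction m; intros n j Hj.
  - eapply prim_ext; [|apply (pconst n 1)]. intros; reflexivity.
  - eapply prim_ext; [|apply (pc2 n nand (fun w => nth j w 0) (fun w => allnz (firstn m (skipn (S j) w)))); [apply P2_nand|apply prim_proj|apply IHm; lia]].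
    intros w L. 
    assert (K : forall j (l : list nat), j < length l -> skipn j l = nth j l 0 :: skipn (S j) l).
    { induction j0; intros l0 H0; destruct l0; simpl in *; try lia; auto. apply IHj0; lia. }
    rewrite (K j w) by lia. reflexivity.
Qed.

Lemma olist_code (l : list (option nat)) :
  (forall ys, olist l = Some ys -> allnz (map ocode l) = 1 /\ map pred (map ocode l) = ys) /\
  (olist l = None -> allnz (map ocode l) = 0).
Proof.
  induction l as [|o l [IH1 IH2]]; simpl.
  - split; [intros ys H; inversion H; auto|discriminate].
  - destruct o as [z|]; simpl.
    + destruct (olist l) as [zs|] eqn:E; simpl.
      * split; [|discriminate]. intros ys H; inversion H; subst. destruct (IH1 zs eq_refl) as [A B].
        rewrite A, B. split; reflexivity.
      * split; [discriminate|]. intros _. simpl in IH2. rewrite IH2; auto.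
    + split; [discriminate|]. auto.
Qed.

Lemma ev_prim : forall t a, prim (S a) (fun zs => ocode (ev (hd 0 zs) t (tl zs))).
Proof.
  induction t using prf_ind'; intros a.
  - eapply prim_ext; [|apply (pconst _ 1)]. intros; reflexivity.
  - eapply prim_ext with (f := fun zs => S (S (nth 1 zs 0))); [|pauto].
    intros [|k [|x xs]] _; reflexivity.
  - eapply prim_ext with (f := fun zs => S (nth (S i) zs 0)); [|pauto].
    intros [|k xs] L; simpl in L; try discriminate. reflexivity.
  -
    set (m := length gs).
    set (Ff := fun zs => ocode (ev (hd 0 zs) t (tl zs))).
    set (O := fun w => ite (allnz (tl w)) (Ff (hd 0 w :: map pred (tl w))) 0).
    assert (HO : prim (S m) O).
    { unfold O. apply pc3; [apply P3_ite| | |apply pconst].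
      - eapply prim_ext; [|apply (prim_fold_nand m (S m) 1); lia].
        intros [|k w] L; simpl in L; try discriminate. simpl. rewrite firstn_all2 by lia. reflexivity.
      - pose proof (prim_comp (S m) (S m) Ff ((fun w => nth 0 w 0) :: map (fun i w => pred (nth i w 0)) (seq 1 m)) (IHt m)) as HH.
        eapply prim_ext; [|apply HH].
        + intros [|k w] L; simpl in L; try discriminate. simpl. f_equal. f_equal.
          rewrite map_map. rewrite <- (map_map (fun i => nth i (k :: w) 0) pred).
          rewrite map_nth_seq by (simpl; lia). reflexivity.
        + simpl. rewrite length_map, length_seq. auto.
        + constructor; [apply prim_proj|]. apply Forall_forall. intros f Hf. apply in_map_iff in Hf as [i [<- _]].
          apply pc1; [apply P1_pred|apply prim_proj]. }
    pose proof (prim_comp (S a) (S m) O ((fun zs => nth 0 zs 0) :: map (fun g zs => ocode (ev (hd 0 zs) g (tl zs))) gs) HO) as HH.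
    eapply prim_ext; [|apply HH].
    + intros [|k xs] L; simpl in L; try discriminate. simpl. rewrite map_map.
      unfold O. cbn [hd tl].
      replace (map (fun x => ocode (ev k x xs)) gs) with (map ocode (map (fun g => ev k g xs) gs)) by (rewrite map_map; reflexivity).
      destruct (olist_code (map (fun g => ev k g xs) gs)) as [C1 C2].
      destruct (olist (map (fun g => ev k g xs) gs)) as [ys|] eqn:E.
      * destruct (C1 ys eq_refl) as [A B]. rewrite A, B. reflexivity.
      * rewrite C2; auto.
    + simpl. rewrite length_map. auto.
    + constructor; [apply prim_proj|]. apply Forall_forall. intros F HF. apply in_map_iff in HF as [g [<- Hg]].
      rewrite Forall_forall in H. apply H; auto.
  -
    destruct a as [|a'].
    + eapply prim_ext; [|apply (pconst _ 0)]. intros [|k [|]] L; simpl in L; try discriminate. reflexivity.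
    + set (Ff := fun zs => ocode (ev (hd 0 zs) t1 (tl zs))).
      set (Fg := fun zs => ocode (ev (hd 0 zs) t2 (tl zs))).
      assert (HG : prim (S (S (S (S a')))) (fun w => ite (nth 1 w 0) (Fg (nth 2 w 0 :: nth 0 w 0 :: pred (nth 1 w 0) :: skipn 4 w)) 0)).
      { apply pc3; [apply P3_ite|apply prim_proj| |apply pconst].
        pose proof (prim_comp (S (S (S (S a')))) (S (S (S a'))) Fg
          ((fun w => nth 2 w 0) :: (fun w => nth 0 w 0) :: (fun w => pred (nth 1 w 0)) :: map (fun i w => nth i w 0) (seq 4 a')) (IHt2 (S (S a')))) as HH.
        eapply prim_ext; [|apply HH].
        - intros w L. simpl. rewrite map_proj_seq_shift by lia. reflexivity.
        - simpl. rewrite length_map, length_seq. auto.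
        - constructor; [apply prim_proj|constructor; [apply prim_proj|constructor; [|apply Forall_prim_proj]]].
          apply pc1; [apply P1_pred|apply prim_proj]. }
      pose proof (prim_rec (S (S a')) (fun zs => nth 1 zs 0) (fun zs => Ff (hd 0 zs :: tl (tl zs))) _ (prim_proj _ _) (prim_drop1 _ _ (IHt1 a')) HG) as HH.
      eapply prim_ext; [|apply HH].
      intros [|k [|n ys]] L; simpl in L; try discriminate. simpl.
      induction n; simpl; auto.
      rewrite IHn. destruct (nat_rect (fun _ : nat => option nat) (ev k t1 ys) _ n) as [r|]; simpl; auto.
  -
    set (Ff := fun zs => ocode (ev (hd 0 zs) t (tl zs))).
    set (Fq := fun ws => Ff (nth 1 ws 0 :: nth 0 ws 0 :: tl (tl ws))).
    assert (HFq : prim (S (S a)) Fq) by (apply prim_swap; apply IHt).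
    set (M := fun zs => bsearch (fun m => nlt (Fq (m :: zs)) 2) (nth 0 zs 0)).
    assert (HM : prim (S a) M).
    { apply (prim_bsearch (S a) (fun zs => nth 0 zs 0) (fun ws => nlt (Fq ws) 2)); pauto. }
    pose proof (prim_let (S a) M (fun w => ite (nlt (nth 0 w 0) (nth 1 w 0)) (ite (neq (Fq w) 1) (S (nth 0 w 0)) 0) 0) HM) as HH.
    eapply prim_ext; [|apply HH; pauto].
    intros [|k xs] L; simpl in L; try discriminate. simpl. rewrite musim_spec. reflexivity.
Qed.
Lemma prim1_total (F : nat -> nat) : prim 1 (fun xs => F (nth 0 xs 0)) -> total_computable (fun x => Some (F x)).
Proof.
  intros [t Ht]. split.
  - exists t. intros x y. split.
    + intros E; inversion E; subst. apply (Ht [x]); auto.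
    + intros Hy. f_equal. eapply evalp_det; [apply (Ht [x]); auto|exact Hy].
  - intros x; discriminate.
Qed.

Lemma P2_evh (th : prf) : P2 (fun k c => ocode (ev k th [c])).
Proof.
  eapply prim_ext; [|apply (ev_prim th 1)].
  intros [|k [|c [|]]] L; simpl in L; try discriminate. reflexivity.
Qed.

Definition dtl c := csnd (pred c).
Definition dhd c := cfst (pred c).
Definition diter i c := nat_rect (fun _ => nat) c (fun _ r => dtl r) i.
Definition dlen c := bsearch (fun n => nnot (diter n c)) (S c).
Definition delem c i := dhd (diter i c).
Definition elem_of (e : nat) : option nat := match e with 0 => None | S n => Some n end.
Definition decode c := map (fun i => elem_of (delem c i)) (seq 0 (dlen c)).

Lemma P1_dtl : P1 dtl. Proof. unfold P1, dtl. pauto. Qed.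
Lemma P1_dhd : P1 dhd. Proof. unfold P1, dhd. pauto. Qed.
#[export] Hint Resolve P1_dtl P1_dhd : primdb.
Lemma P2_diter : P2 diter.
Proof.
  unfold P2, diter.
  apply (prim_rec 2 (fun xs => nth 0 xs 0) (fun xs => nth 1 xs 0) (fun zs => dtl (nth 1 zs 0))); pauto.
Qed.
#[export] Hint Resolve P2_diter : primdb.
Lemma P1_dlen : P1 dlen.
Proof.
  unfold P1, dlen. apply (prim_bsearch 1 (fun xs => S (nth 0 xs 0)) (fun zs => nnot (diter (nth 0 zs 0) (nth 1 zs 0)))); pauto.
Qed.
Lemma P2_delem : P2 delem. Proof. unfold P2, delem. pauto. Qed.
#[export] Hint Resolve P1_dlen P2_delem : primdb.

Lemma code_elem_of e : code_elem (elem_of e) = e.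
Proof. destruct e; reflexivity. Qed.
Lemma elem_of_code a : elem_of (code_elem a) = a.
Proof. destruct a; reflexivity. Qed.

Lemma dtl_cons a s : dtl (code_seq (a :: s)) = code_seq s.
Proof. unfold dtl. simpl. apply csnd_cpair. Qed.
Lemma dhd_cons a s : dhd (code_seq (a :: s)) = code_elem a.
Proof. unfold dhd. simpl. apply cfst_cpair. Qed.
Lemma dtl_0 : dtl 0 = 0.
Proof. reflexivity. Qed.

Lemma diter_code s i : diter i (code_seq s) = code_seq (skipn i s).
Proof.
  revert s; induction i; intros s; simpl; auto.
  unfold diter in *. simpl. rewrite IHi.
  destruct s as [|a s]; simpl.
  - rewrite skipn_nil. apply dtl_0.
  - clear IHi. revert s a. induction i; intros s a; simpl.
    + apply dtl_cons.
    + destruct s as [|b s]; simpl. rewrite skipn_nil. apply dtl_0.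
      specialize (IHi s b). simpl in IHi. exact IHi.
Qed.

Lemma code_seq_ge s : length s <= code_seq s.
Proof. induction s; simpl; auto. pose proof (cpair_ge_snd (code_elem a) (code_seq s)). lia. Qed.

Lemma code_seq_0 s : code_seq s = 0 -> s = [].
Proof. destruct s; simpl; auto; discriminate. Qed.

Lemma dlen_code s : dlen (code_seq s) = length s.
Proof.
  unfold dlen. apply bsearch_eq.
  - pose proof (code_seq_ge s). lia.
  - rewrite diter_code, skipn_all2 by lia. simpl. discriminate.
  - intros j Hj. rewrite diter_code. destruct (skipn j s) eqn:E.
    + exfalso. assert (length (skipn j s) = length s - j) by apply length_skipn. rewrite E in H. simpl in H. lia.
    + reflexivity.
Qed.

Lemma delem_code s i : i < length s -> delem (code_seq s) i = code_elem (nth i s None).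
Proof.
  intros H. unfold delem. rewrite diter_code.
  revert s H; induction i; intros [|a s] H; simpl in *; try lia.
  - apply dhd_cons.
  - apply IHi. lia.
Qed.

Lemma map_nth_seq_gen {A} (l : list A) d : map (fun i => nth i l d) (seq 0 (length l)) = l.
Proof.
  induction l as [|x l IH]; simpl; auto. f_equal. rewrite <- seq_shift, map_map. simpl. exact IH.
Qed.

Lemma decode_code s : decode (code_seq s) = s.
Proof.
  unfold decode. rewrite dlen_code.
  rewrite <- (map_nth_seq_gen s None) at 2.
  apply map_ext_in. intros i Hi. apply in_seq in Hi.
  rewrite delem_code by lia. apply elem_of_code.
Qed.

Lemma code_surj c : exists s, code_seq s = c.
Proof.
  induction c as [c IH] using (well_founded_induction lt_wf).
  destruct c as [|c'].
  - exists []. reflexivity.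
  - assert (Hlt : dtl (S c') < S c').
    { unfold dtl. simpl. pose proof (cpair_surj c'). pose proof (cpair_ge_snd (cfst c') (csnd c')). lia. }
    destruct (IH _ Hlt) as [s Hs].
    exists (elem_of (dhd (S c')) :: s). simpl. rewrite code_elem_of, Hs.
    unfold dhd, dtl. simpl. rewrite cpair_surj. reflexivity.
Qed.

Lemma code_decode c : code_seq (decode c) = c.
Proof. destruct (code_surj c) as [s <-]. rewrite decode_code. reflexivity. Qed.

Lemma code_seq_inj s s' : code_seq s = code_seq s' -> s = s'.
Proof. intros H. rewrite <- (decode_code s), <- (decode_code s'), H. reflexivity. Qed.
Definition subD D c := ball (fun i => ite (delem c i) (bit D (pred (delem c i))) 1) (dlen c).
Definition pref c c' := nand (nlt (dlen c) (S (dlen c'))) (ball (fun i => neq (delem c i) (delem c' i)) (dlen c)).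

Lemma P2_subD : P2 subD.
Proof.
  unfold P2, subD.
  apply (prim_ball 2 (fun xs => dlen (nth 1 xs 0)) (fun zs => ite (delem (nth 2 zs 0) (nth 0 zs 0)) (bit (nth 1 zs 0) (pred (delem (nth 2 zs 0) (nth 0 zs 0)))) 1)); pauto.
Qed.
Lemma P2_pref : P2 pref.
Proof.
  unfold P2, pref. apply pc2; [apply P2_nand|pauto|].
  apply (prim_ball 2 (fun xs => dlen (nth 0 xs 0)) (fun zs => neq (delem (nth 1 zs 0) (nth 0 zs 0)) (delem (nth 2 zs 0) (nth 0 zs 0)))); pauto.
Qed.
#[export] Hint Resolve P2_subD P2_pref : primdb.

Lemma ite_nz c a b : ite c a b <> 0 <-> (c <> 0 /\ a <> 0) \/ (c = 0 /\ b <> 0).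
Proof. destruct c; simpl; split; intros; try lia; tauto. Qed.

Lemma nand_nz a b : nand a b <> 0 <-> a <> 0 /\ b <> 0.
Proof. unfold nand. destruct a, b; simpl; split; intros; lia. Qed.

Lemma subD_spec D s : subD D (code_seq s) <> 0 <-> forall x, In (Some x) s -> bit D x <> 0.
Proof.
  unfold subD. rewrite ball_spec, dlen_code. split.
  - intros H x Hx. destruct (In_nth _ _ None Hx) as [i [Hi Ei]].
    specialize (H i Hi). rewrite delem_code, Ei in H by auto. simpl in H. exact H.
  - intros H i Hi. rewrite delem_code by auto.
    destruct (nth i s None) as [x|] eqn:E; simpl; [|lia].
    apply H. rewrite <- E. apply nth_In; auto.
Qed.

Lemma code_elem_inj a b : code_elem a = code_elem b -> a = b.
Proof. intros H. rewrite <- (elem_of_code a), <- (elem_of_code b), H. reflexivity. Qed.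

Lemma pref_spec s s' : pref (code_seq s) (code_seq s') <> 0 <-> exists r, s' = s ++ r.
Proof.
  unfold pref. rewrite nand_nz, ball_spec, !dlen_code, nlt_spec. split.
  - intros [H1 H2]. destruct (length s <? S (length s')) eqn:E; [|lia]. apply Nat.ltb_lt in E.
    exists (skipn (length s) s'). rewrite <- (firstn_skipn (length s) s') at 1. f_equal.
    apply (nth_ext _ _ None None).
    + rewrite length_firstn. lia.
    + intros i Hi. rewrite length_firstn in Hi. rewrite nth_firstn.
      destruct (i <? length s) eqn:E2; [|apply Nat.ltb_ge in E2; lia].
      specialize (H2 i ltac:(lia)). rewrite neq_spec in H2. destruct (_ =? _) eqn:E3; [|lia].
      apply Nat.eqb_eq in E3. rewrite !delem_code in E3 by lia. apply code_elem_inj. auto.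
  - intros [r ->]. rewrite length_app. split.
    + destruct (_ <? _) eqn:E; [lia|apply Nat.ltb_ge in E; lia].
    + intros i Hi. rewrite neq_spec, !delem_code by (rewrite ?length_app; lia).
      rewrite app_nth1 by auto. rewrite Nat.eqb_refl. lia.
Qed.

Definition fsum (l : list nat) := fold_right (fun x c => 2 ^ x + c) 0 l.

Lemma fsum_testbit l : NoDup l -> forall v, Nat.testbit (fsum l) v = true <-> In v l.
Proof.
  induction 1 as [|x l Hx Hl IH]; intros v; simpl.
  - rewrite Nat.bits_0. split; [discriminate|tauto].
  - rewrite Nat.add_nocarry_lxor.
    + rewrite Nat.lxor_spec, Nat.pow2_bits_eqb.
      destruct (x =? v) eqn:E.
      * apply Nat.eqb_eq in E; subst. destruct (Nat.testbit (fsum l) v) eqn:F.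
        -- exfalso. apply Hx. apply IH. auto.
        -- simpl. tauto.
      * apply Nat.eqb_neq in E. simpl. rewrite IH. intuition.
    + apply Nat.bits_inj_0. intros n. rewrite Nat.land_spec, Nat.pow2_bits_eqb.
      destruct (x =? n) eqn:E; auto. apply Nat.eqb_eq in E; subst.
      destruct (Nat.testbit (fsum l) n) eqn:F; auto. exfalso. apply Hx, IH; auto.
Qed.

Lemma in_somes x s : In x (somes s) <-> In (Some x) s.
Proof.
  induction s as [|[a|] s IH]; simpl; [tauto| |].
  - rewrite IH. split; intros [H|H]; auto; left; congruence.
  - rewrite IH. split; auto. intros [H|H]; [discriminate|auto].
Qed.

Lemma canon_bit T i x : bit (canon_content T i) x <> 0 <-> exists j, j < i /\ T j = Some x.
Proof.
  rewrite bit_testbit. unfold canon_content. fold (fsum (nodup Nat.eq_dec (somes (initseg T i)))).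
  assert (A : Nat.testbit (fsum (nodup Nat.eq_dec (somes (initseg T i)))) x = true <-> exists j, j < i /\ T j = Some x).
  { rewrite fsum_testbit by apply NoDup_nodup. rewrite nodup_In, in_somes. unfold initseg.
    rewrite in_map_iff. split; intros [j [H1 H2]]; exists j; [apply in_seq in H2; split; [lia|auto]|split; auto; apply in_seq; lia]. }
  rewrite <- A. destruct (Nat.testbit _ x); split; intros; auto; try lia; discriminate.
Qed.

Definition memc c v := bex (fun i => neq (delem c i) (S v)) (dlen c).
Definition canonc c := nat_rect (fun _ => nat) 0 (fun v r => r + memc c v * 2 ^ v) c.

Lemma P2_memc : P2 memc.
Proof.
  unfold P2, memc.
  apply (prim_bex 2 (fun xs => dlen (nth 0 xs 0)) (fun zs => neq (delem (nth 1 zs 0) (nth 0 zs 0)) (S (nth 2 zs 0)))); pauto.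
Qed.
#[export] Hint Resolve P2_memc : primdb.
Lemma P1_canonc : P1 canonc.
Proof.
  unfold P1, canonc.
  apply (prim_rec 1 (fun xs => nth 0 xs 0) (fun _ => 0) (fun zs => nth 1 zs 0 + memc (nth 2 zs 0) (nth 0 zs 0) * pow2 (nth 0 zs 0))); pauto.
Qed.
#[export] Hint Resolve P1_canonc : primdb.

Lemma nlt01 a b : nlt a b = 0 \/ nlt a b = 1.
Proof. rewrite nlt_spec. destruct (a <? b); auto. Qed.

Lemma memc01 c v : memc c v = 0 \/ memc c v = 1.
Proof. unfold memc, bex. apply nlt01. Qed.

Lemma memc_spec s v : memc (code_seq s) v = 1 <-> In (Some v) s.
Proof.
  assert (E : memc (code_seq s) v <> 0 <-> In (Some v) s).
  { unfold memc. rewrite bex_spec, dlen_code. split.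
    - intros [i [Hi H]]. rewrite neq_spec in H. destruct (_ =? _) eqn:E; [|lia]. apply Nat.eqb_eq in E.
      rewrite delem_code in E by auto. apply (code_elem_inj _ (Some v)) in E. rewrite <- E. apply nth_In; auto.
    - intros Hin. destruct (In_nth _ _ None Hin) as [i [Hi Ei]]. exists i. split; auto.
      rewrite neq_spec, delem_code, Ei by auto. simpl. rewrite Nat.eqb_refl. lia. }
  destruct (memc01 (code_seq s) v) as [H|H]; rewrite H in *; split; intro X.
  - discriminate.
  - apply E in X. lia.
  - apply E; lia.
  - reflexivity.
Qed.

Lemma fsum_app l1 l2 : fsum (l1 ++ l2) = fsum l1 + fsum l2.
Proof. induction l1; simpl; auto. unfold fsum in *. rewrite IHl1. lia. Qed.

Definition csum B c := nat_rect (fun _ => nat) 0 (fun v r => r + memc c v * 2 ^ v) B.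


Lemma csum_fsum B c : csum B c = fsum (filter (fun v => memc c v =? 1) (seq 0 B)).
Proof.
  induction B; [reflexivity|]. unfold csum in *. cbn [nat_rect]. rewrite IHB, seq_S, filter_app, fsum_app. simpl.
  destruct (memc01 c B) as [H|H]; rewrite H; simpl; unfold fsum; simpl; lia.
Qed.

Lemma testbit_ext a b : (forall v, Nat.testbit a v = true <-> Nat.testbit b v = true) -> a = b.
Proof.
  intros H. apply Nat.bits_inj. intros v. specialize (H v).
  destruct (Nat.testbit a v), (Nat.testbit b v); auto; [symmetry|]; apply H; auto.
Qed.

Lemma in_code_lt s v : In (Some v) s -> v < code_seq s.
Proof.
  induction s as [|a s IH]; simpl; [tauto|]. intros [H|H].
  - subst. simpl. pose proof (cpair_ge_fst (S v) (code_seq s)). lia.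
  - pose proof (IH H). pose proof (cpair_ge_snd (code_elem a) (code_seq s)). lia.
Qed.

Lemma canonc_code s : canonc (code_seq s) = fsum (nodup Nat.eq_dec (somes s)).
Proof.
  change (canonc (code_seq s)) with (csum (code_seq s) (code_seq s)). rewrite csum_fsum.
  apply testbit_ext. intros v.
  rewrite !fsum_testbit by (apply NoDup_nodup || (apply NoDup_filter; apply seq_NoDup)).
  rewrite filter_In, in_seq, nodup_In, in_somes, Nat.eqb_eq, memc_spec.
  split; [tauto|]. intros H. split; auto. pose proof (in_code_lt s v H). lia.
Qed.

Definition Gfun c := cpair (canonc c) (dlen c).
Lemma P1_Gfun : P1 Gfun. Proof. unfold P1, Gfun. pauto. Qed.

Lemma length_initseg T i : length (initseg T i) = i.
Proof. unfold initseg. rewrite length_map, length_seq. auto. Qed.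

Lemma Gfun_initseg T i : Gfun (code_seq (initseg T i)) = cpair (canon_content T i) i.
Proof. unfold Gfun. rewrite canonc_code, dlen_code, length_initseg. reflexivity. Qed.
Definition tapp (s : list (option nat)) (T : text) : text :=
  fun n => if n <? length s then nth n s None else T (n - length s).

Lemma initseg_S T i : initseg T (S i) = initseg T i ++ [T i].
Proof. unfold initseg. rewrite seq_S, map_app. reflexivity. Qed.

Lemma initseg_tapp2 s T n : initseg (tapp s T) (length s + n) = s ++ initseg T n.
Proof.
  induction n.
  - rewrite Nat.add_0_r, app_nil_r. unfold initseg, tapp.
    rewrite <- (map_nth_seq_gen s None) at 2. apply map_ext_in. intros i Hi. apply in_seq in Hi.
    destruct (i <? length s) eqn:E; auto. apply Nat.ltb_ge in E. lia.
  - rewrite Nat.add_succ_r, !initseg_S, IHn, app_assoc. f_equal. f_equal.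
    unfold tapp. destruct (_ <? _) eqn:E; [apply Nat.ltb_lt in E; lia|]. f_equal. lia.
Qed.

Lemma initseg_tapp s T : initseg (tapp s T) (length s) = s.
Proof. pose proof (initseg_tapp2 s T 0). rewrite Nat.add_0_r, app_nil_r in H. exact H. Qed.

Lemma content_tapp s T x : content (tapp s T) x <-> In (Some x) s \/ content T x.
Proof.
  unfold content, tapp. split.
  - intros [n Hn]. destruct (n <? length s) eqn:E.
    + left. apply Nat.ltb_lt in E. rewrite <- Hn. apply nth_In; auto.
    + right. eauto.
  - intros [H|[n Hn]].
    + destruct (In_nth _ _ None H) as [i [Hi Ei]]. exists i. destruct (i <? length s) eqn:E; auto.
      apply Nat.ltb_ge in E; lia.
    + exists (length s + n). destruct (_ <? _) eqn:E; [apply Nat.ltb_lt in E; lia|]. rewrite <- Hn. f_equal. lia.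
Qed.

Lemma R_total I (HI : R_monoid I) (F : nat -> nat) : P1 F -> I (fun x => Some (F x)).
Proof. intros HF. destruct HI as (_ & _ & _ & HR). apply HR. apply prim1_total. exact HF. Qed.

Lemma I_comp I (HI : R_monoid I) h (F : nat -> nat) : I h -> P1 F -> I (fun x => h (F x)).
Proof.
  intros Hh HF. destruct HI as (A & B & C & D).
  apply (C h (fun x => Some (F x))); auto. apply (R_total I (conj A (conj B (conj C D)))); auto.
Qed.

Lemma dir21 (phi : nat -> pfun) (I : pfun -> Prop) (HI : R_monoid I)
    (S : (nat -> Prop) -> Prop) (LL : (nat -> Prop) -> Prop) :
  (exists h, I h /\ (forall L, LL L -> learns phi Psdbeta h L) /\ defined_on Psdbeta h S) ->
  (exists h, I h /\ (forall L, LL L -> learns phi Gbeta h L) /\ defined_on Gbeta h S).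
Proof.
  intros [h (Hh & HL & HD)].
  exists (fun x => h (Gfun x)). split; [apply I_comp; auto; apply P1_Gfun|].
  assert (E : forall T n, Gbeta (fun x => h (Gfun x)) T n = Psdbeta h T n).
  { intros T n. unfold Gbeta, Psdbeta. rewrite Gfun_initseg. reflexivity. }
  split.
  - intros L HLL T HT. destruct (HL L HLL T HT) as [p (H1 & H2 & H3)]. exists p. split; auto.
    intros n. rewrite E. auto.
  - intros T HT n. rewrite E. apply HD; auto.
Qed.
Definition Hk (th : prf) k c := ocode (ev k th [c]).
Definition accept th D t c :=
  nand (subD D c) (nand (Hk th t c)
    (ball (fun c' => nimp (nand (pref c c') (nand (subD D c') (Hk th t c'))) (neq (Hk th t c') (Hk th t c))) (S t))).
Definition Mfun th x := bsearch (fun c => accept th (cfst x) (csnd x) c) (S (csnd x)).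
Definition Ffun th x := ite (nlt (Mfun th x) (S (csnd x))) (Mfun th x) 0.

Lemma P1_Ffun th : P1 (Ffun th).
Proof.
  assert (HH : P2 (Hk th)) by apply P2_evh.
  assert (HA : P3 (accept th)).
  { unfold P3, accept. apply pc2; [apply P2_nand|pauto|]. apply pc2; [apply P2_nand|pauto|].
    apply (prim_ball 3 (fun xs => S (nth 1 xs 0))
      (fun zs => nimp (nand (pref (nth 3 zs 0) (nth 0 zs 0)) (nand (subD (nth 1 zs 0) (nth 0 zs 0)) (Hk th (nth 2 zs 0) (nth 0 zs 0))))
                      (neq (Hk th (nth 2 zs 0) (nth 0 zs 0)) (Hk th (nth 2 zs 0) (nth 3 zs 0))))); pauto. }
  assert (HM : prim 1 (fun xs => Mfun th (nth 0 xs 0))).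
  { unfold Mfun. apply (prim_bsearch 1 (fun xs => S (csnd (nth 0 xs 0))) (fun zs => accept th (cfst (nth 1 zs 0)) (csnd (nth 1 zs 0)) (nth 0 zs 0))); pauto. }
  unfold P1, Ffun. pauto.
Qed.

Definition ok (T : text) (s : list (option nat)) := forall x, In (Some x) s -> content T x.

Lemma ok_app T s1 s2 : ok T (s1 ++ s2) <-> ok T s1 /\ ok T s2.
Proof. unfold ok. split; [intros H; split; intros x Hx; apply H; apply in_app_iff; auto|].
  intros [H1 H2] x Hx. apply in_app_iff in Hx as [Hx|Hx]; auto. Qed.

Lemma set_eq_tapp s T L : ok T s -> set_eq (content T) L -> set_eq (content (tapp s T)) L.
Proof.
  intros Hs HT x. rewrite content_tapp, <- (HT x). split; [intros [H|H]; auto|auto].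
Qed.

Lemma Gbeta_tapp h s T : Gbeta h (tapp s T) (length s) = h (code_seq s).
Proof. unfold Gbeta. rewrite initseg_tapp. reflexivity. Qed.

Lemma hdef_L phi h L (HL : learns phi Gbeta h L) T (HT : set_eq (content T) L) s :
  ok T s -> exists y, h (code_seq s) = Some y.
Proof.
  intros Hs. destruct (HL (tapp s T) (set_eq_tapp s T L Hs HT)) as [p (H1 & _)].
  exists (p (length s)). rewrite <- (Gbeta_tapp h s T). apply H1.
Qed.

Lemma hdef_S h S (HS : closed_under_subsets S) (HD : defined_on Gbeta h S) T (HT : TxtS S T) s :
  ok T s -> h (code_seq s) <> None.
Proof.
  intros Hs. rewrite <- (Gbeta_tapp h s T). apply HD. unfold TxtS in *.
  apply (HS (content T)); auto. intros x Hx. apply content_tapp in Hx as [Hx|Hx]; auto.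
Qed.

Lemma decode_0 : decode 0 = [].
Proof. exact (decode_code []). Qed.

Lemma Ffun_ok th T i : ok T (decode (Ffun th (cpair (canon_content T i) i))).
Proof.
  unfold Ffun. rewrite csnd_cpair. rewrite nlt_spec.
  destruct (Mfun th (cpair (canon_content T i) i) <? S i) eqn:E; simpl; [|rewrite decode_0; intros x []].
  apply Nat.ltb_lt in E. unfold Mfun in *. rewrite csnd_cpair in *. rewrite cfst_cpair in *.
  pose proof (bsearch_found _ _ E) as Hf.
  set (m := bsearch _ _) in *. unfold accept in Hf. apply nand_nz in Hf as [Hf _].
  rewrite <- (code_decode m) in Hf. rewrite subD_spec in Hf.
  intros x Hx. specialize (Hf x Hx). apply canon_bit in Hf as [j [_ Hj]]. exists j; auto.
Qed.
Fixpoint bbseq (f : list (option nat) -> list (option nat)) (T : text) (n : nat) : list (option nat) :=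
  match n with
  | 0 => []
  | S n => (bbseq f T n ++ [T n]) ++ f (bbseq f T n ++ [T n])
  end.

Lemma bbseq_len f T n : n <= length (bbseq f T n).
Proof. induction n; simpl; auto. rewrite !length_app. simpl. lia. Qed.

Lemma bbseq_pref f T i j : i <= j -> exists r, bbseq f T j = bbseq f T i ++ r.
Proof.
  induction 1.
  - exists []. rewrite app_nil_r. auto.
  - destruct IHle as [r Hr]. simpl. rewrite Hr. exists ((r ++ [T m]) ++ f ((bbseq f T i ++ r) ++ [T m])).
    rewrite !app_assoc. reflexivity.
Qed.

Lemma bbseq_nth f T i j n : n < length (bbseq f T i) -> n < length (bbseq f T j) ->
  nth n (bbseq f T i) None = nth n (bbseq f T j) None.
Proof.
  intros Hi Hj. destruct (le_ge_dec i j) as [H|H].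
  - destruct (bbseq_pref f T i j H) as [r Hr]. rewrite Hr, app_nth1; auto.
  - destruct (bbseq_pref f T j i H) as [r Hr]. rewrite Hr, app_nth1; auto.
Qed.

Definition bbtext f T : text := fun n => nth n (bbseq f T (S n)) None.

Lemma bbtext_initseg f T i m : m <= length (bbseq f T i) -> initseg (bbtext f T) m = firstn m (bbseq f T i).
Proof.
  intros Hm. apply (nth_ext _ _ None None).
  - rewrite length_initseg, length_firstn. lia.
  - intros n Hn. rewrite length_initseg in Hn. unfold initseg.
    rewrite (nth_indep _ None (bbtext f T 0)) by (rewrite length_map, length_seq; auto).
    rewrite map_nth, seq_nth by auto. simpl. rewrite nth_firstn.
    destruct (n <? m) eqn:E; [|apply Nat.ltb_ge in E; lia].
    unfold bbtext. apply bbseq_nth; [pose proof (bbseq_len f T (S n)); lia|lia].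
Qed.

Lemma blum phi h L (HL : learns phi Gbeta h L) T (HT : set_eq (content T) L) :
  exists s, ok T s /\ forall r, ok T r -> h (code_seq (s ++ r)) = h (code_seq s).
Proof.
  apply NNPP; intro Hno.
  assert (Hstep : forall s, exists r, ok T s -> ok T r /\ h (code_seq (s ++ r)) <> h (code_seq s)).
  { intros s. destruct (classic (ok T s)) as [Hs|Hs]; [|exists []; tauto].
    apply NNPP; intro Hn. apply Hno. exists s. split; auto. intros r Hr.
    apply NNPP. intro Hne. apply Hn. exists r. auto. }
  set (f := fun s => proj1_sig (constructive_indefinite_description _ (Hstep s))).
  assert (Hf : forall s, ok T s -> ok T (f s) /\ h (code_seq (s ++ f s)) <> h (code_seq s)).
  { intros s. unfold f. destruct (constructive_indefinite_description _ (Hstep s)). simpl. auto. }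
  assert (Hok : forall n, ok T (bbseq f T n)).
  { induction n; simpl; [intros x []|].
    assert (A : ok T (bbseq f T n ++ [T n])).
    { apply ok_app. split; auto. intros x [Hx|[]]. exists n. auto. }
    apply ok_app. split; auto. apply Hf. auto. }
  assert (Hc : set_eq (content (bbtext f T)) L).
  { intros x. rewrite <- (HT x). split.
    - intros [n Hn]. unfold bbtext in Hn. apply (Hok (S n)). rewrite <- Hn. apply nth_In.
      pose proof (bbseq_len f T (S n)). lia.
    - intros [n Hn]. exists (length (bbseq f T n)). unfold bbtext.
      rewrite (bbseq_nth f T _ (S n)).
      + simpl. rewrite <- app_assoc, app_nth2 by lia. rewrite Nat.sub_diag. simpl. auto.
      + pose proof (bbseq_len f T (S (length (bbseq f T n)))). lia.
      + simpl. rewrite !length_app. simpl. lia. }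
  destruct (HL _ Hc) as [p (Hp & _ & [n0 Hn0])].
  set (s := bbseq f T n0 ++ [T n0]).
  assert (Hs : ok T s).
  { apply ok_app. split; auto. intros x [Hx|[]]. exists n0. auto. }
  assert (E1 : h (code_seq s) = Some (p (length s))).
  { rewrite <- (Hp (length s)). unfold Gbeta. rewrite (bbtext_initseg f T (S n0)).
    - simpl. fold s. rewrite firstn_app, Nat.sub_diag, firstn_all. simpl. rewrite app_nil_r. auto.
    - simpl. fold s. rewrite length_app. lia. }
  assert (E2 : h (code_seq (s ++ f s)) = Some (p (length (s ++ f s)))).
  { rewrite <- (Hp (length (s ++ f s))). unfold Gbeta. rewrite (bbtext_initseg f T (S n0)).
    - simpl. fold s. rewrite firstn_all. auto.
    - simpl. fold s. lia. }
  assert (L1 : n0 <= length s) by (pose proof (bbseq_len f T n0); unfold s; rewrite length_app; lia).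
  assert (L2 : n0 <= length (s ++ f s)) by (rewrite length_app; lia).
  destruct (Hn0 _ L1) as [A1 _]. destruct (Hn0 _ L2) as [A2 _].
  apply (proj2 (Hf s Hs)). rewrite E1, E2, A1, A2. reflexivity.
Qed.
Lemma Hk_sound h th (Hth : forall x y, h x = Some y <-> evalp th [x] y) k c y :
  Hk th k c = S y -> h c = Some y.
Proof.
  unfold Hk. destruct (ev k th [c]) eqn:E; simpl; intros H; [|discriminate].
  injection H as ->. apply Hth. eapply ev_sound; eauto.
Qed.

Lemma Hk_cases h th (Hth : forall x y, h x = Some y <-> evalp th [x] y) k c :
  Hk th k c = 0 \/ exists y, Hk th k c = S y /\ h c = Some y.
Proof.
  destruct (Hk th k c) eqn:E; auto. right. exists n. split; auto. eapply Hk_sound; eauto.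
Qed.

Lemma Hk_event h th (Hth : forall x y, h x = Some y <-> evalp th [x] y) c y :
  h c = Some y -> exists k0, forall k, k0 <= k -> Hk th k c = S y.
Proof.
  intros H. apply Hth in H. apply ev_complete in H as [k0 Hk0]. exists k0. intros k Hkk.
  unfold Hk. rewrite (ev_mono _ _ k _ _ Hk0 Hkk). reflexivity.
Qed.

Lemma ok_event T s : ok T s -> exists N0, forall N, N0 <= N -> subD (canon_content T N) (code_seq s) <> 0.
Proof.
  intros Hs.
  assert (A : exists N0, forall N, N0 <= N -> forall x, In (Some x) s -> exists j, j < N /\ T j = Some x).
  { clear - Hs. induction s as [|a s IH].
    - exists 0. intros N _ x [].
    - destruct IH as [N1 HN1]. { intros x Hx. apply Hs. right. auto. }
      destruct a as [y|].
      + destruct (Hs y (or_introl eq_refl)) as [j Hj]. exists (max N1 (S j)). intros N HN x [Hx|Hx].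
        * injection Hx as <-. exists j. split; auto; lia.
        * apply HN1; auto; lia.
      + exists N1. intros N HN x [Hx|Hx]; [discriminate|]. apply HN1; auto. }
  destruct A as [N0 HN0]. exists N0. intros N HN. apply subD_spec. intros x Hx.
  apply canon_bit. apply HN0; auto.
Qed.

Lemma subD_ok T N c : subD (canon_content T N) c <> 0 -> ok T (decode c).
Proof.
  intros H. rewrite <- (code_decode c) in H. rewrite subD_spec in H. intros x Hx.
  destruct (proj1 (canon_bit T N x) (H x Hx)) as [j [_ Hj]]. exists j; auto.
Qed.

Lemma finite_event c0 (Q : nat -> nat -> Prop) :
  (forall c, c < c0 -> exists N0, forall N, N0 <= N -> Q c N) -> exists N0, forall N, N0 <= N -> forall c, c < c0 -> Q c N.
Proof.
  induction c0; intros H.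
  - exists 0. intros; lia.
  - destruct IHc0 as [N1 H1]. { intros c Hc. apply H. lia. }
    destruct (H c0 ltac:(lia)) as [N2 H2]. exists (max N1 N2). intros N HN c Hc.
    destruct (Nat.eq_dec c c0); [subst; apply H2; lia|apply H1; lia].
Qed.

Lemma least_nat (P : nat -> Prop) : (exists n, P n) -> exists n, P n /\ forall m, m < n -> ~ P m.
Proof.
  intros [n Hn]. induction n as [n IH] using (well_founded_induction lt_wf).
  destruct (classic (exists m, m < n /\ P m)) as [[m [Hm1 Hm2]]|Hno].
  - apply (IH m); auto.
  - exists n. split; auto. intros m Hm HPm. apply Hno. eauto.
Qed.

Lemma nimp_nz a b : nimp a b <> 0 <-> (a <> 0 -> b <> 0).
Proof. unfold nimp, nor, nnot, ite. destruct a, b; simpl; split; intros; try lia; auto; exfalso; apply H; lia. Qed.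

Lemma accept_nz th D t c : accept th D t c <> 0 <->
  subD D c <> 0 /\ Hk th t c <> 0 /\
  (forall c', c' < S t -> pref c c' <> 0 -> subD D c' <> 0 -> Hk th t c' <> 0 -> Hk th t c' = Hk th t c).
Proof.
  unfold accept. rewrite !nand_nz, ball_spec. split.
  - intros (A & B & C). repeat split; auto. intros c' Hc' P1 P2 P3. specialize (C c' Hc').
    rewrite nimp_nz, !nand_nz, neq_spec in C. destruct (_ =? _) eqn:E; [apply Nat.eqb_eq; auto|].
    exfalso. apply C; auto.
  - intros (A & B & C). repeat split; auto. intros c' Hc'. rewrite nimp_nz, !nand_nz, neq_spec.
    intros (P1 & P2 & P3). rewrite (C c' Hc' P1 P2 P3), Nat.eqb_refl. lia.
Qed.

Definition lock (h : pfun) (T : text) (s : list (option nat)) := ok T s /\ forall r, ok T r -> h (code_seq (s ++ r)) = h (code_seq s).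

Lemma lock_correct phi h L (HL : learns phi Gbeta h L) T (HT : set_eq (content T) L) s y :
  lock h T s -> h (code_seq s) = Some y -> set_eq (W phi y) (content T).
Proof.
  intros [Hs Hl] Hy.
  destruct (HL _ (set_eq_tapp s T L Hs HT)) as [p (Hp & _ & [n1 Hn1])].
  set (m := length s + n1).
  assert (E : p m = y).
  { assert (A := Hp m). unfold Gbeta in A. unfold m in A. rewrite initseg_tapp2 in A.
    rewrite Hl in A.
    - unfold m. congruence.
    - intros x Hx. unfold initseg in Hx. apply in_map_iff in Hx as [j [Hj _]]. exists j; auto. }
  destruct (Hn1 m ltac:(unfold m; lia)) as [A B]. rewrite E in A. rewrite A.
  intros x. rewrite (B x), (set_eq_tapp s T L Hs HT x), (HT x). tauto.
Qed.

Lemma fulk_ex phi h th (Hth : forall x y, h x = Some y <-> evalp th [x] y) L (HL : learns phi Gbeta h L)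
  T (HT : set_eq (content T) L) p (Hp : forall n, h (Ffun th (cpair (canon_content T n) n)) = Some (p n)) :
  Ex phi p T.
Proof.
  destruct (blum phi h L HL T HT) as [s0 Hs0].
  destruct (least_nat (fun c => lock h T (decode c))) as [c0 [Hc0 Hmin]].
  { exists (code_seq s0). rewrite decode_code. exact Hs0. }
  destruct (hdef_L phi h L HL T HT (decode c0) (proj1 Hc0)) as [y0 Hy0]. rewrite code_decode in Hy0.
  assert (Hrej : forall c, c < c0 -> exists N0, forall N, N0 <= N -> accept th (canon_content T N) N c = 0).
  { intros c Hc. specialize (Hmin c Hc).
    destruct (classic (ok T (decode c))) as [Hok|Hnok].
    2:{ exists 0. intros N _. destruct (accept th (canon_content T N) N c) eqn:E; auto. exfalso.
        assert (A : accept th (canon_content T N) N c <> 0) by lia. apply accept_nz in A as (A & _).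
        apply Hnok. eapply subD_ok; eauto. }
    assert (Hex : exists r, ok T r /\ h (code_seq (decode c ++ r)) <> h (code_seq (decode c))).
    { apply NNPP; intro Hn. apply Hmin. split; auto. intros r Hr. apply NNPP; intro Hne. apply Hn; eauto. }
    destruct Hex as [r [Hr Hne]].
    set (c' := code_seq (decode c ++ r)).
    assert (Hokc' : ok T (decode c ++ r)) by (apply ok_app; auto).
    destruct (hdef_L phi h L HL T HT _ Hok) as [y1 Hy1]. rewrite code_decode in Hy1, Hne.
    destruct (hdef_L phi h L HL T HT _ Hokc') as [y2 Hy2]. fold c' in Hy2, Hne.
    destruct (Hk_event h th Hth c y1 Hy1) as [k1 Hk1].
    destruct (Hk_event h th Hth c' y2 Hy2) as [k2 Hk2].
    destruct (ok_event T _ Hokc') as [k3 Hk3].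
    exists (max c' (max k1 (max k2 k3))). intros N HN.
    destruct (accept th (canon_content T N) N c) eqn:E; auto. exfalso.
    assert (A : accept th (canon_content T N) N c <> 0) by lia. apply accept_nz in A as (_ & _ & A).
    specialize (A c' ltac:(lia)).
    rewrite (Hk1 N), (Hk2 N) in A by lia.
    assert (P : pref c c' <> 0). { unfold c'. rewrite <- (code_decode c) at 1. apply pref_spec. eauto. }
    specialize (A P (Hk3 N ltac:(lia)) ltac:(lia)). apply Hne. rewrite Hy1, Hy2. congruence. }
  assert (Hacc : exists N0, forall N, N0 <= N -> accept th (canon_content T N) N c0 <> 0).
  { destruct Hc0 as [Hok0 Hl0].
    destruct (Hk_event h th Hth c0 y0 Hy0) as [k1 Hk1].
    destruct (ok_event T _ Hok0) as [k2 Hk2]. rewrite code_decode in Hk2.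
    exists (max k1 k2). intros N HN. apply accept_nz. repeat split.
    - apply Hk2; lia.
    - rewrite Hk1 by lia. lia.
    - intros c' Hc' P1 P2 P3. rewrite (Hk1 N) by lia.
      destruct (Hk_cases h th Hth N c') as [Z|[y' [Ey' Hy']]]; [lia|]. rewrite Ey'. f_equal.
      rewrite <- (code_decode c0), <- (code_decode c') in P1. apply pref_spec in P1 as [r Hr].
      apply subD_ok in P2. rewrite Hr in P2. apply ok_app in P2 as [_ Hr'].
      specialize (Hl0 r Hr'). rewrite <- Hr, !code_decode in Hl0. congruence. }
  destruct (finite_event c0 _ Hrej) as [N1 HN1].
  destruct Hacc as [N2 HN2].
  set (N0 := max c0 (max N1 N2)).
  assert (Hval : forall N, N0 <= N -> p N = y0).
  { intros N HN. specialize (Hp N).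
    assert (M : Mfun th (cpair (canon_content T N) N) = c0).
    { unfold Mfun. rewrite cfst_cpair, csnd_cpair. apply bsearch_eq.
      - unfold N0 in HN. lia.
      - apply HN2. unfold N0 in HN; lia.
      - intros j Hj. apply HN1; auto. unfold N0 in HN; lia. }
    unfold Ffun in Hp. rewrite M, csnd_cpair, nlt_spec in Hp.
    destruct (c0 <? S N) eqn:E; [|apply Nat.ltb_ge in E; unfold N0 in HN; lia]. simpl in Hp. congruence. }
  exists N0. intros n Hn. rewrite (Hval n Hn), (Hval N0 (le_n _)). split; auto.
  rewrite <- (code_decode c0) in Hy0. apply (lock_correct phi h L HL T HT (decode c0)); auto.
Qed.
Lemma dir12 (phi : nat -> pfun) (I : pfun -> Prop) (HI : R_monoid I)
    (S : (nat -> Prop) -> Prop) (HS : closed_under_subsets S) (LL : (nat -> Prop) -> Prop) :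
  (exists h, I h /\ (forall L, LL L -> learns phi Gbeta h L) /\ defined_on Gbeta h S) ->
  (exists h, I h /\ (forall L, LL L -> learns phi Psdbeta h L) /\ defined_on Psdbeta h S).
Proof.
  intros [h (Hh & HL & HD)].
  destruct (proj1 HI h Hh) as [th Hth].
  exists (fun x => h (Ffun th x)). split; [apply I_comp; auto; apply P1_Ffun|].
  assert (Hc : forall T n, code_seq (decode (Ffun th (cpair (canon_content T n) n))) = Ffun th (cpair (canon_content T n) n))
    by (intros; apply code_decode).
  split.
  - intros L HLL T HT.
    assert (Hdef : forall n, exists y, h (Ffun th (cpair (canon_content T n) n)) = Some y).
    { intros n. destruct (hdef_L phi h L (HL L HLL) T HT _ (Ffun_ok th T n)) as [y Hy]. rewrite Hc in Hy. eauto. }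
    set (p := fun n => match h (Ffun th (cpair (canon_content T n) n)) with Some y => y | None => 0 end).
    assert (Hp : forall n, h (Ffun th (cpair (canon_content T n) n)) = Some (p n)).
    { intros n. unfold p. destruct (Hdef n) as [y Hy]. rewrite Hy. reflexivity. }
    exists p. split; [exact Hp|split].
    + intros [n [Hsub [x [Hx Hnx]]]].
      set (s := decode (Ffun th (cpair (canon_content T n) n))).
      pose proof (Ffun_ok th T n) as Hok. fold s in Hok.
      destruct (HL L HLL (tapp s T) (set_eq_tapp s T L Hok HT)) as [p' (Hp' & Hcaut & _)].
      assert (E : p' (length s) = p n).
      { specialize (Hp' (length s)). rewrite Gbeta_tapp in Hp'. unfold s in Hp'. rewrite Hc, Hp in Hp'. injection Hp' as E'. exact (eq_sym E'). }
      apply Hcaut. exists (length s). rewrite E. split.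
      * intros z Hz. apply Hsub. apply content_tapp in Hz as [Hz|Hz]; auto.
      * exists x. split; auto. intros Hz. apply Hnx. apply content_tapp in Hz as [Hz|Hz]; auto.
    + apply (fulk_ex phi h th Hth L (HL L HLL) T HT p Hp).
  - intros T HT n. unfold Psdbeta.
    pose proof (hdef_S h S HS HD T HT _ (Ffun_ok th T n)). rewrite Hc in H. exact H.
Qed.

Theorem theorem6 (phi : nat -> pfun) (Hphi : acceptable phi)
    (I : pfun -> Prop) (HI : R_monoid I)
    (S : (nat -> Prop) -> Prop) (HS : closed_under_subsets S)
    (LL : (nat -> Prop) -> Prop) :
  (exists h, I h /\ (forall L, LL L -> learns phi Gbeta h L) /\ defined_on Gbeta h S)
  <->
  (exists h, I h /\ (forall L, LL L -> learns phi Psdbeta h L) /\ defined_on Psdbeta h S).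
Proof.
  split; [apply dir12; auto|apply dir21; auto].
Qed.
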